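(* Let $0\leq A<B$ be integers. There exist integers $L\geq 2$ and $a_j,b_j$ for $2\leq j\leq L$ such that \[ A=a_2\leq\cdots\leq a_L=b_L\leq\cdots\leq b_2=B, \] with $\varepsilon_i(a_j)=\varepsilon_i(b_j)=0$ for $2\leq i<j\leq L$, and $a_{j+1}-a_j\in\{0,F_{j-1}\}$ and $b_j-b_{j+1}\in\{0,F_j\}$ for $2\leq j<L$.
   Context: Let $F_0=0$, $F_1=1$, $F_k=F_{k-1}+F_{k-2}$ be the Fibonacci numbers. Every positive integer $n$ has a unique (Zeckendorf) representation $n=\sum_{i\geq 2}\varepsilon_i(n)F_i$ with $\varepsilon_i(n)\in\{0,1\}$ and $\varepsilon_i(n)=1\Rightarrow\varepsilon_{i+1}(n)=0$; for $n=0$ all $\varepsilon_i(0)=0$. *)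

(* Defs.v *)
From mathcomp Require Import all_boot.
Set Implicit Arguments. Unset Strict Implicit. Unset Printing Implicit Defensive.

Fixpoint fib (k : nat) : nat :=
  match k with
  | 0 => 0
  | 1 => 1
  | (k'.+1 as k1).+1 => fib k1 + fib k'
  end.

Definition zeck_valid (S : seq nat) : Prop :=
  uniq S /\ (forall i, i \in S -> 2 <= i) /\ (forall i, i \in S -> i.+1 \notin S).

(* eps_i(n) = 1 : i belongs to the (unique) Zeckendorf representation of n,
   i.e. n = \sum_{i in S} F_i with S a Zeckendorf index set.  For n = 0 the
   representation is empty, so all digits vanish. *)
Definition zeck_digit (i n : nat) : Prop :=
  exists S : seq nat, zeck_valid S /\ \sum_(k <- S) fib k = n /\ i \in S.

(* Main.v *)
Require Import Defs.
From mathcomp Require Import all_boot zify.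
Set Implicit Arguments.
Unset Strict Implicit.

Lemma fibSS n : fib n.+2 = fib n.+1 + fib n. Proof. by []. Qed.
Lemma fib_mono {m n} : m <= n -> fib m <= fib n.
Proof.
have st k : fib k <= fib k.+1 by case: k => // k; rewrite fibSS; lia.
elim: n => [|n IH]; first by rewrite leqn0 => /eqP ->.
rewrite leq_eqVlt => /orP [/eqP -> //|/IH h]; exact: leq_trans h (st n).
Qed.
Lemma fib_pos n : 0 < n -> 0 < fib n.
Proof. case: n => // n _; have := @fib_mono 1 n.+1 (ltn0Sn n) ; done. Qed.
Lemma fib_pred m : 0 < m -> fib m.+1 = fib m + fib m.-1.
Proof. by case: m. Qed.
Lemma fib_ge n : n.-1 <= fib n.
Proof.
elim/ltn_ind: n => [[|[|n]]] // IH; rewrite fibSS.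
have := IH n.+1 (ltnSn _); have := @fib_pos n.+1 (ltn0Sn n); rewrite !succnK.
case: n IH => [|n] IH //; have := @fib_pos n.+1 (ltn0Sn n); lia.
Qed.

Definition sf (S : seq nat) := \sum_(k <- S) fib k.
Lemma sum_rem (S : seq nat) (e : nat) : uniq S -> e \in S ->
  sf S = fib e + sf [seq i <- S | i != e].
Proof. by move=> u h; rewrite /sf big_filter (bigD1_seq e). Qed.

Lemma valid_filter (S : seq nat) (e : nat) : zeck_valid S -> zeck_valid [seq i <- S | i != e].
Proof.
move=> [u [h2 hc]]; split; first exact: filter_uniq.
split=> i; rewrite mem_filter => /andP [_ hi]; first exact: h2.
rewrite mem_filter negb_and (hc _ hi) orbT //.
Qed.

Lemma elem_le (S : seq nat) (e : nat) : e \in S -> e <= \sum_(k <- S) k.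
Proof.
elim: S => //= x s IH; rewrite in_cons big_cons => /orP [/eqP ->|/IH]; lia.
Qed.

Lemma elem_fib (S : seq nat) (e : nat) : uniq S -> e \in S -> fib e <= sf S.
Proof. by move=> u h; rewrite (sum_rem u h) leq_addr. Qed.
Lemma nil_of (X : seq nat) k m : (forall i, i \in X -> k <= i < m) -> m <= k -> X = [::].
Proof. case: X => // x s h hm; have := h x (mem_head _ _); lia. Qed.

Lemma valid_ge2 X i : zeck_valid X -> i \in X -> 2 <= i.
Proof. by move=> [_ [h _]]; apply: h. Qed.

Lemma valid_nosucc X i : zeck_valid X -> i \in X -> i.+1 \in X -> False.
Proof. by move=> [_ [_ h]] /h /negP. Qed.

Lemma bound k : forall m X, zeck_valid X -> (forall i, i \in X -> k <= i < m) ->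
  k <= m.+1 -> sf X + fib k.-1 <= fib m.
Proof.
elim/ltn_ind => m IH X hv hX hk.
case: m IH hX hk => [|m] IH hX hk.
  rewrite (nil_of hX (leq0n k)) /sf big_nil; have -> : k.-1 = 0 by lia. by [].
have u : uniq X by case: hv.
case: (boolP (m \in X)) => hm.
  have m2 := valid_ge2 hv hm.
  have km : k <= m by have := hX m hm; lia.
  rewrite (sum_rem u hm).
  have hX' : forall i, i \in [seq i <- X | i != m] -> k <= i < m.-1.
    move=> i; rewrite mem_filter => /andP [hne hi].
    have := hX i hi; have : i != m.-1.
      apply/eqP => ei; apply: (valid_nosucc hv hi); rewrite ei prednK //; lia.
    lia.
  have := IH m.-1 ltac:(lia) _ (valid_filter m hv) hX' ltac:(lia).
  rewrite fib_pred; lia.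
case: (leqP k m.+1) => hk'.
  have := IH m (ltnSn _) X hv _ hk'.
  have hmon := @fib_mono m m.+1 (leqnSn _).
  have : (forall i, i \in X -> k <= i < m).
    move=> i hi; have := hX i hi; have : i != m by apply: contraNneq hm => <-.
    lia.
  move=> h1 h2; have := h2 h1; lia.
rewrite (nil_of hX (_ : m.+1 <= k)); last lia.
rewrite /sf big_nil.
have -> : k.-1 = m.+1 by lia. by [].
Qed.
Lemma restr_not (X : seq nat) k m : (forall i, i \in X -> k <= i < m.+1) -> m \notin X ->
  forall i, i \in X -> k <= i < m.
Proof. move=> h hm i hi; have := h i hi; have : i != m by apply: contraNneq hm => <-. lia. Qed.

Lemma restr_filt (X : seq nat) k m : (forall i, i \in X -> k <= i < m.+1) ->
  forall i, i \in [seq j <- X | j != m] -> k <= i < m.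
Proof. move=> h i; rewrite mem_filter => /andP [hne hi]; have := h i hi; lia. Qed.

Lemma bound2 m X : zeck_valid X -> (forall i, i \in X -> i < m) -> 1 <= m -> sf X < fib m.
Proof.
move=> hv hX hm; have := @bound 2 m X hv.
have h : forall i, i \in X -> 2 <= i < m by move=> i hi; rewrite (valid_ge2 hv hi) hX.
move=> /(_ h); rewrite /=; lia.
Qed.

Lemma uniq_rep : forall m S T, zeck_valid S -> zeck_valid T ->
  (forall i, i \in S -> 0 <= i < m) -> (forall i, i \in T -> 0 <= i < m) ->
  sf S = sf T -> forall i, (i \in S) = (i \in T).
Proof.
elim/ltn_ind => m IH S T hS hT hS' hT' e.
case: m IH hS' hT' => [|m] IH hS' hT'.
  by rewrite (nil_of hS' (leqnn 0)) (nil_of hT' (leqnn 0)).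
have uS : uniq S by case: hS.
have uT : uniq T by case: hT.
case: (boolP (m \in S)) => mS; case: (boolP (m \in T)) => mT.
- have := IH m (ltnSn _) _ _ (valid_filter m hS) (valid_filter m hT)
     (restr_filt hS') (restr_filt hT').
  rewrite (sum_rem uS mS) (sum_rem uT mT) in e.
  move=> /(_ ltac:(lia)) h i; have := h i; rewrite !mem_filter.
  by case: (eqVneq i m) => [->|]; rewrite ?mS ?mT.
- have m1 := valid_ge2 hS mS.
  have := @bound2 m T hT (fun i hi => (andP (restr_not hT' mT hi)).2) ltac:(lia).
  have := elem_fib uS mS; lia.
- have m1 := valid_ge2 hT mT.
  have := @bound2 m S hS (fun i hi => (andP (restr_not hS' mS hi)).2) ltac:(lia).
  have := elem_fib uT mT; lia.
- exact: IH m (ltnSn _) _ _ hS hT (restr_not hS' mS) (restr_not hT' mT) e.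
Qed.

Lemma gap k : 2 <= k -> forall m X Y, zeck_valid X -> zeck_valid Y ->
  (forall i, i \in X -> k <= i < m) -> (forall i, i \in Y -> k <= i < m) ->
  sf X < sf Y -> sf X + fib k.-1 <= sf Y.
Proof.
move=> k2; elim/ltn_ind => m IH X Y hX hY hX' hY' e.
case: m IH hX' hY' => [|m] IH hX' hY'.
  by move: e; rewrite (nil_of hX' (leq0n k)) (nil_of hY' (leq0n k)) /sf big_nil.
have uX : uniq X by case: hX.
have uY : uniq Y by case: hY.
case: (boolP (m \in X)) => mX; case: (boolP (m \in Y)) => mY.
- have := IH m (ltnSn _) _ _ (valid_filter m hX) (valid_filter m hY)
     (restr_filt hX') (restr_filt hY').
  rewrite (sum_rem uX mX) (sum_rem uY mY) in e *.
  move=> /(_ ltac:(lia)); lia.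
- have m1 := valid_ge2 hX mX.
  have := @bound2 m Y hY (fun i hi => (andP (restr_not hY' mY hi)).2) ltac:(lia).
  have := elem_fib uX mX; lia.
- have km : k <= m by have := hY' m mY; lia.
  have := @bound k m X hX (restr_not hX' mX) ltac:(lia).
  have := elem_fib uY mY; lia.
- exact: IH m (ltnSn _) _ _ hX hY (restr_not hX' mX) (restr_not hY' mY) e.
Qed.
Definition Zset j n := exists S, zeck_valid S /\ sf S = n /\ forall i, i \in S -> j <= i.

Lemma Z_nodigit j n i : 2 <= i < j -> Zset j n -> ~ zeck_digit i n.
Proof.
move=> hij [S [hS [eS hS']]] [T [hT [eT hiT]]].
have hb : forall i, i \in S ++ T -> 0 <= i < (\sum_(k <- S ++ T) k).+1.
  by move=> l hl; have := elem_le hl; lia.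
have hbS : forall l, l \in S -> 0 <= l < (\sum_(k <- S ++ T) k).+1.
  by move=> l hl; apply: hb; rewrite mem_cat hl.
have hbT : forall l, l \in T -> 0 <= l < (\sum_(k <- S ++ T) k).+1.
  by move=> l hl; apply: hb; rewrite mem_cat hl orbT.
have := @uniq_rep _ S T hS hT hbS hbT (etrans eS (esym eT)) i.
rewrite hiT => h; have := hS' i h; lia.
Qed.

Lemma Zset_mono j x : Zset j.+1 x -> Zset j x.
Proof. move=> [S [h [e h']]]; exists S; split => //; split => // i /h'; lia. Qed.

Lemma exist_rep : forall m n, n < fib m ->
  exists S, zeck_valid S /\ sf S = n /\ forall i, i \in S -> i < m.
Proof.
elim/ltn_ind => m IH n hn.
case: (posnP n) => [->|n0].
  by exists [::]; split; [split => // | rewrite /sf big_nil].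
case: m IH hn => [|m] IH hn; first by [].
case: (ltnP n (fib m)) => hnm.
  have [S [hS [eS hS']]] := IH m (ltnSn _) n hnm.
  by exists S; split => //; split => // i /hS'; lia.
have m2 : 2 <= m by case: m IH hn hnm => [|[|m]] //= *; lia.
have := fib_pred (_ : 0 < m); rewrite -/(fib m.+1) => /(_ ltac:(lia)) ef.
have [S [[u [h2 hc]] [eS hS']]] := IH m.-1 ltac:(lia) (n - fib m) ltac:(lia).
exists (m :: S); split; last split.
- split; first by rewrite /= u andbT; apply/negP => /hS'; lia.
  split.
    by move=> i; rewrite in_cons => /orP [/eqP ->|/h2].
  move=> i; rewrite !in_cons => /orP [/eqP ->|hi].
    rewrite negb_or; apply/andP; split; first by rewrite eqn_leq; lia.
    by apply/negP => /hS'; lia.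
  rewrite negb_or hc // andbT; have := hS' i hi; rewrite eqn_leq; lia.
- rewrite /sf big_cons -/(sf S) eS; lia.
- move=> i; rewrite in_cons => /orP [/eqP ->|/hS']; lia.
Qed.

Lemma Zset2 n : Zset 2 n.
Proof.
have := fib_ge n.+2; rewrite succnK => h.
have [S [hS [eS _]]] := @exist_rep n.+2 n h.
by exists S; split => //; split => // i; apply: valid_ge2.
Qed.

Lemma Zset_split j x : Zset j x -> Zset j.+1 x \/ exists u, x = fib j + u /\ Zset j.+2 u.
Proof.
move=> [S [hS [eS hS']]].
have u : uniq S by case: hS.
case: (boolP (j \in S)) => jS.
  right; exists (sf [seq i <- S | i != j]); split.
    by rewrite -eS (sum_rem u jS).
  exists [seq i <- S | i != j]; split; first exact: valid_filter.
  split => // i; rewrite mem_filter => /andP [hne hi].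
  have := hS' i hi; have : i != j.+1.
    by apply/eqP => ei; apply: (valid_nosucc hS jS); rewrite -ei.
  lia.
left; exists S; split => //; split => // i hi.
have := hS' i hi; have : i != j by apply: contraNneq jS => <-. lia.
Qed.
Lemma Zset_carry : forall x m, 2 <= m -> Zset m.+1 x -> Zset m (fib m + x).
Proof.
elim/ltn_ind => x IH m m2 hx.
case: (Zset_split hx) => [[S [hS [eS hS']]] | [u [ex hu]]].
  have [u [h2 hc]] := hS.
  exists (m :: S); split; last split.
  - split; first by rewrite /= u andbT; apply/negP => /hS'; lia.
    split.
      by move=> i; rewrite in_cons => /orP [/eqP ->|/h2].
    move=> i; rewrite !in_cons => /orP [/eqP ->|hi].
      rewrite negb_or; apply/andP; split; first by rewrite eqn_leq; lia.
      by apply/negP => /hS'; lia.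
    rewrite negb_or hc // andbT; have := hS' i hi; rewrite eqn_leq; lia.
  - by rewrite /sf big_cons -/(sf S) eS.
  - move=> i; rewrite in_cons => /orP [/eqP ->|/hS']; lia.
have f1 := @fib_pos m.+1 (ltn0Sn _).
have := IH u ltac:(lia) m.+2 ltac:(lia) hu.
rewrite ex fibSS addnA (addnC (fib m)) => /Zset_mono /Zset_mono //.
Qed.

Lemma Zgap k x y : 2 <= k -> Zset k x -> Zset k y -> x < y -> x + fib k.-1 <= y.
Proof.
move=> k2 [S [hS [eS hS']]] [T [hT [eT hT']]] hxy.
have hb : forall i, i \in S ++ T -> i < (\sum_(k <- S ++ T) k).+1.
  by move=> l hl; have := elem_le hl; lia.
have hbS : forall l, l \in S -> k <= l < (\sum_(k <- S ++ T) k).+1.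
  by move=> l hl; rewrite hS' // hb // mem_cat hl.
have hbT : forall l, l \in T -> k <= l < (\sum_(k <- S ++ T) k).+1.
  by move=> l hl; rewrite hT' // hb // mem_cat hl orbT.
rewrite -eS -eT; apply: (gap k2 hS hT hbS hbT); lia.
Qed.

Lemma step j x y : 2 <= j -> x < y -> Zset j x -> Zset j y ->
  exists x' y', Zset j.+1 x' /\ Zset j.+1 y' /\ x <= x' /\ x' <= y' /\ y' <= y /\
   (x' - x = 0 \/ x' - x = fib j.-1) /\ (y - y' = 0 \/ y - y' = fib j).
Proof.
move=> j2 xy hx hy.
have ef := @fib_pred j ltac:(lia).
have g := Zgap j2 hx hy xy.
case: (Zset_split hx) => [hx1 | [u [ex hu]]];
case: (Zset_split hy) => [hy1 | [v [ey hv]]].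
- exists x, y; split => //; split => //; lia.
- exists x, v; split => //; split; first exact: Zset_mono.
  have : x <= v.
    case: (leqP x v) => // vx.
    have h2 : 2 <= j.+1 by lia.
    have := Zgap h2 (Zset_mono hv) hx1 vx; rewrite succnK; lia.
  lia.
- exists (fib j.+1 + u), y; split; first by apply: Zset_carry => //; lia.
  split => //; lia.
- exists (fib j.+1 + u), v; split; first by apply: Zset_carry => //; lia.
  split; first exact: Zset_mono.
  have uv : u < v by lia.
  have h2 : 2 <= j.+2 by lia.
  have := Zgap h2 hu hv uv; rewrite succnK; lia.
Qed.
Definition Good j x y :=
  exists L (a b : nat -> nat), j <= L /\ a j = x /\ b j = y /\ a L = b L /\
   (forall k, j <= k < L -> a k <= a k.+1) /\ (forall k, j <= k < L -> b k.+1 <= b k) /\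
   (forall k, j <= k <= L -> Zset k (a k) /\ Zset k (b k)) /\
   (forall k, j <= k < L -> (a k.+1 - a k = 0 \/ a k.+1 - a k = fib k.-1) /\
                           (b k - b k.+1 = 0 \/ b k - b k.+1 = fib k)).

Lemma good_stop j x : Zset j x -> Good j x x.
Proof.
move=> hx; exists j, (fun _ => x), (fun _ => x).
split; first done. split; first done. split; first done. split; first done.
split; first by move=> k; lia. split; first by move=> k; lia.
split; last by move=> k; lia.
by move=> k hk; have -> : k = j by lia.
Qed.

Lemma good_stop' j x y : y <= x -> x <= y -> Zset j x -> Good j x y.
Proof. move=> h1 h2; have -> : y = x by lia. exact: good_stop. Qed.

Lemma main : forall t j x y, y + 3 <= j + t -> 2 <= j -> x <= y -> Zset j x -> Zset j y ->
  Good j x y.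
Proof.
elim => [|t IH] j x y ht j2 xy hx hy;
  (case: (ltnP x y) => xy'; last by apply: good_stop').
  have := Zgap j2 hx hy xy'; have := fib_ge j.-1; lia.
have [x' [y' [hx' [hy' [h1 [h2 [h3 [h4 h5]]]]]]]] := step j2 xy' hx hy.
have [L [a [b [hL [ea [eb [eab [ha [hb [hz hs]]]]]]]]]] :=
  IH j.+1 x' y' ltac:(lia) ltac:(lia) h2 hx' hy'.
exists L, (fun k => if k == j then x else a k), (fun k => if k == j then y else b k).
rewrite eqxx; split; first lia. do 2 (split => //).
have eL : (L == j) = false by apply/eqP; lia.
rewrite eL; split => //.
have E k : j <= k -> (k == j) = false -> j.+1 <= k by move=> hk /eqP; lia.
split.
  move=> k hk; have -> : (k.+1 == j) = false by apply/eqP; lia.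
  case: eqP => [->|/eqP ne]; first by rewrite ea.
  apply: ha; move/eqP: ne; lia.
split.
  move=> k hk; have -> : (k.+1 == j) = false by apply/eqP; lia.
  case: eqP => [->|/eqP ne]; first by rewrite eb.
  apply: hb; move/eqP: ne; lia.
split.
  move=> k hk; case: eqP => [->|/eqP ne]; first by [].
  apply: hz; move/eqP: ne; lia.
move=> k hk; have -> : (k.+1 == j) = false by apply/eqP; lia.
case: eqP => [->|/eqP ne]; first by rewrite ea eb.
apply: hs; move/eqP: ne; lia.
Qed.

Theorem lemma5 (A B : nat) (hAB : A < B) :
  exists (L : nat) (a b : nat -> nat),
    2 <= L /\
    a 2 = A /\ b 2 = B /\ a L = b L /\
    (forall j, 2 <= j < L -> a j <= a j.+1) /\
    (forall j, 2 <= j < L -> b j.+1 <= b j) /\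
    (forall i j, 2 <= i -> i < j -> j <= L ->
        ~ zeck_digit i (a j) /\ ~ zeck_digit i (b j)) /\
    (forall j, 2 <= j < L ->
        (a j.+1 - a j = 0 \/ a j.+1 - a j = fib j.-1) /\
        (b j - b j.+1 = 0 \/ b j - b j.+1 = fib j)).
Proof.
have [L [a [b [hL [ea [eb [eab [ha [hb [hz hs]]]]]]]]]] :=
  @main (B + 3) 2 A B ltac:(lia) (leqnn 2) (ltnW hAB) (Zset2 A) (Zset2 B).
exists L, a, b; do 6 (split => //).
split => // i j hi hij hjL.
have [za zb] := hz j ltac:(lia).
split; apply: (@Z_nodigit j); lia || assumption.
Qed.
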